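(* Let $A$ be an archimedean $*$-algebra, $x\in A_+$, and $\bar x$ its image in $C^*(A)$. Then $\bar x$ is invertible in $C^*(A)$ if and only if there exists a positive rational $\alpha$ with $x-\alpha\in A_+$.
   Context: A $*$-algebra is a unital algebra over $\mathbb{Q}$ with a $\mathbb{Q}$-linear involution $x\mapsto x^*$ satisfying $(xy)^*=y^*x^*$; rational scalars are identified with multiples of the unit. $A_+=\{\sum_{i=1}^n x_i^*x_i: n\in\mathbb{N},x_i\in A\}$, and $x\leq y$ means $y-x\in A_+$. For $x\in A$, $\|x\|=\sqrt{\inf\{\alpha\in\mathbb{Q}_{>0}: x^*x\leq\alpha\}}\in[0,\infty]$; $A_i=\{x:\|x\|=0\}$. $A$ is archimedean if $-1\notin A_+$ and $\|x\|<\infty$ for all $x$. $C^*(A)=\mathbb{C}\otimes_{\mathbb{R}}C^*_{\mathbb{R}}(A)$, where $C^*_{\mathbb{R}}(A)$ is the completion of $A/A_i$ with respect to the norm induced by $\|\cdot\|$. *)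

(* Defs.v *)
From HB Require Import structures.
From mathcomp Require Import all_boot all_order all_algebra.
Set Implicit Arguments. Unset Strict Implicit. Unset Printing Implicit Defensive.
Import Order.TTheory GRing.Theory Num.Theory.
Local Open Scope ring_scope.

Section StarAlg.
Variable A : algType rat.
Variable st : A -> A.

Record star_alg : Prop := {
  star_linear : forall (a : rat) (x y : A), st (a *: x + y) = a *: st x + st y;
  star_invol : forall x, st (st x) = x;
  star_mul : forall x y, st (x * y) = st y * st x }.

Definition pos_cone (a : A) : Prop :=
  exists s : seq A, a = \sum_(y <- s) st y * y.

Definition sle (x y : A) : Prop := pos_cone (y - x).

Definition norm_bound (x : A) (alpha : rat) : Prop :=
  0 < alpha /\ sle (st x * x) alpha%:A.

(* ||x|| < e  (for rational e > 0): inf{alpha | x^*x <= alpha} < e^2 *)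
Definition norm_lt (x : A) (e : rat) : Prop :=
  exists alpha, norm_bound x alpha /\ alpha < e ^+ 2.

Definition archimedean : Prop :=
  ~ pos_cone (-1) /\ forall x, exists alpha, norm_bound x alpha.

(* Completion C*_R(A) of A/A_i: Cauchy sequences modulo null sequences. *)
Definition cauchy (u : nat -> A) : Prop :=
  forall e : rat, 0 < e -> exists N : nat, forall m n : nat,
    (N <= m)%N -> (N <= n)%N -> norm_lt (u m - u n) e.

Definition null_seq (u : nat -> A) : Prop :=
  forall e : rat, 0 < e -> exists N : nat, forall n : nat,
    (N <= n)%N -> norm_lt (u n) e.

Definition ceq (u v : nat -> A) : Prop := null_seq (fun n => u n - v n).

(* C*(A) = C (x)_R C*_R(A): pairs (re, im) of elements of C*_R(A). *)
Definition cpair := ((nat -> A) * (nat -> A))%type.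

Definition Cstar_elt (p : cpair) : Prop := cauchy p.1 /\ cauchy p.2.

Definition Cstar_eq (p q : cpair) : Prop := ceq p.1 q.1 /\ ceq p.2 q.2.

Definition Cstar_mul (p q : cpair) : cpair :=
  (fun n => p.1 n * q.1 n - p.2 n * q.2 n,
   fun n => p.1 n * q.2 n + p.2 n * q.1 n).

Definition Cstar_img (x : A) : cpair := (fun _ => x, fun _ => 0).

Definition Cstar_invertible (p : cpair) : Prop :=
  exists q, Cstar_elt q /\ Cstar_eq (Cstar_mul p q) (Cstar_img 1)
                        /\ Cstar_eq (Cstar_mul q p) (Cstar_img 1).

End StarAlg.

(* Main.v *)
Require Import Defs.
From HB Require Import structures.
From mathcomp Require Import all_boot all_order all_algebra.
From mathcomp Require Import ring lra.
Import Order.TTheory GRing.Theory Num.Theory.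
Local Open Scope ring_scope.



Lemma geo (r : rat) n m : (n <= m)%N ->
  (1 - r) * \sum_(n <= k < m) r ^+ k = r ^+ n - r ^+ m.
Proof.
move=> /subnKC <-; elim: (m - n)%N => [|d IH]; first by rewrite addn0 big_geq // mulr0 subrr.
rewrite addnS big_nat_recr /=; last by rewrite leq_addr.
by rewrite mulrDr IH exprS; ring.
Qed.

Lemma bern (r : rat) n : 0 <= r -> r <= 1 -> r ^+ n * (1 + n%:R * (1 - r)) <= 1.
Proof.
move=> r0 r1; elim: n => [|n IH]; first by rewrite expr0 mul0r addr0 mulr1.
have hp : 0 <= r ^+ n by apply: exprn_ge0.
have hp1 : r ^+ n <= 1 by apply: exprn_ile1.
rewrite exprS mulrS.
have h3 := ler_wpM2l r0 IH.
have h4 : r * r ^+ n <= 1 by apply: mulr_ile1.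
have h5 : 0 <= 1 - r by lra.
have h6 := ler_wpM2r h5 h4.
lra.
Qed.

Lemma small (r e : rat) : 0 <= r -> r < 1 -> 0 < e -> exists N : nat, r ^+ N < e.
Proof.
move=> r0 r1 e0.
have h0 : 0 <= (e * (1 - r))^-1 by rewrite invr_ge0; apply: mulr_ge0; lra.
have [N hN] : exists N : nat, (e * (1 - r))^-1 < N%:R.
  by exists (Num.Def.archi_bound (e * (1 - r))^-1); apply: archi_boundP.
exists N.
have hb := @bern r N r0 (ltW r1).
have hp : 0 <= r ^+ N by apply: exprn_ge0.
have h1 : 0 < e * (1 - r) by apply: mulr_gt0; lra.
have h2 : 1 < N%:R * (e * (1 - r)).
  have hi : (e * (1 - r))^-1 * (e * (1 - r)) = 1 by rewrite mulVf // gt_eqF.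
  by have h := hN; rewrite -(ltr_pM2r h1) hi in h.
rewrite ltNge; apply/negP => het.
have hN0 : 0 <= N%:R * (1 - r) :> rat by apply: mulr_ge0; [apply: ler0n | lra].
have := ler_wpM2r hN0 het.
lra.
Qed.

Section Lin.
Variable V : lmodType rat.
Variable z : nat -> V.
Definition fl (p : {poly rat}) := \sum_(i < 6) p`_i *: z i.
Lemma flD p q : fl (p + q) = fl p + fl q.
Proof. by rewrite /fl -big_split; apply: eq_bigr => i _; rewrite coefD scalerDl. Qed.
Lemma flN p : fl (- p) = - fl p.
Proof. by rewrite /fl -sumrN; apply: eq_bigr => i _; rewrite coefN scaleNr. Qed.
Lemma flB p q : fl (p - q) = fl p - fl q.
Proof. by rewrite flD flN. Qed.
Lemma flZ c p : fl (c%:P * p) = c *: fl p.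
Proof. by rewrite /fl scaler_sumr; apply: eq_bigr => i _; rewrite coefCM scalerA. Qed.
Lemma flX (i : 'I_6) : fl ('X^i) = z i.
Proof.
rewrite /fl (bigD1 i) //= coefXn eqxx scale1r big1 ?addr0 // => j hj.
rewrite coefXn; case: eqP => [/val_inj eji|_]; last by rewrite scale0r.
by rewrite eji eqxx in hj.
Qed.
End Lin.
Arguments fl {V}.


Section Basic.
Variable A : algType rat.
Variable st : A -> A.
Hypothesis hst : star_alg st.

Local Notation P := (pos_cone st).

Lemma st0 : st 0 = 0.
Proof.
have := star_linear hst 1 0 0; rewrite scale1r addr0 scale1r => h.
by apply: (@addrI _ (st 0)); rewrite addr0 -h.
Qed.

Lemma stD x y : st (x + y) = st x + st y.
Proof. by have := star_linear hst 1 x y; rewrite !scale1r. Qed.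

Lemma stZ (a : rat) x : st (a *: x) = a *: st x.
Proof. by have := star_linear hst a x 0; rewrite !addr0 st0 addr0. Qed.

Lemma stN x : st (- x) = - st x.
Proof. by rewrite -scaleN1r stZ scaleN1r. Qed.

Lemma stB x y : st (x - y) = st x - st y.
Proof. by rewrite stD stN. Qed.

Lemma stM x y : st (x * y) = st y * st x.
Proof. by case: hst. Qed.

Lemma st1 : st 1 = 1.
Proof.
have h1 := star_mul hst 1 (st 1).
rewrite mul1r (star_invol hst) mul1r in h1.
by rewrite -h1.
Qed.

Lemma stC (a : rat) : st a%:A = a%:A.
Proof. by rewrite stZ st1. Qed.

Lemma stX x n : st x = x -> st (x ^+ n) = x ^+ n.
Proof.
move=> hx; elim: n => [|n IH]; first by rewrite !expr0 st1.
by rewrite exprS stM IH hx -exprSr -exprS.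
Qed.

Lemma P0 : P 0.
Proof. by exists [::]; rewrite big_nil. Qed.

Lemma PD x y : P x -> P y -> P (x + y).
Proof. by move=> [s ->] [t ->]; exists (s ++ t); rewrite big_cat. Qed.

Lemma Psq a : P (st a * a).
Proof. by exists [:: a]; rewrite big_seq1. Qed.

Lemma Pconj a z : P z -> P (st a * z * a).
Proof.
move=> [s ->]; exists (map (fun y => y * a) s).
rewrite big_map mulr_sumr mulr_suml; apply: eq_bigr => y _.
by rewrite stM !mulrA.
Qed.

Lemma Pnat (k : nat) z : P z -> P (k%:R *: z).
Proof.
move=> hz; elim: k => [|k IH]; first by rewrite scale0r; exact: P0.
by rewrite mulrS scalerDl scale1r; apply: PD.
Qed.

Lemma Psq_scale (t : rat) z : P z -> P ((t * t) *: z).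
Proof.
move=> [s ->]; exists (map (fun y => t *: y) s).
rewrite big_map scaler_sumr; apply: eq_bigr => y _.
by rewrite stZ -scalerAl -scalerAr scalerA.
Qed.

Lemma ratdec (c : rat) : 0 <= c -> c = (`|numq c|%N * `|denq c|%N)%:R * ((`|denq c|%N)%:R^-1 * (`|denq c|%N)%:R^-1).
Proof.
move=> c0.
have hn : 0 <= numq c by rewrite numq_ge0.
have hd : 0 < denq c by rewrite denq_gt0.
rewrite natrM !natr_absz !ger0_norm ?(ltW hd) //.
have hd' : (denq c)%:~R != 0 :> rat by rewrite intr_eq0 gt_eqF.
rewrite -{1}(divq_num_den c). field. done.
Qed.

Lemma PZ (c : rat) z : 0 <= c -> P z -> P (c *: z).
Proof.
move=> c0 hz.
rewrite (ratdec _ c0) -scalerA; apply: Pnat; exact: Psq_scale.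
Qed.

Lemma PC (c : rat) : 0 <= c -> P c%:A.
Proof. by move=> c0; apply: PZ => //; rewrite -st1 -[st 1]mulr1; apply: Psq. Qed.

Lemma Pherm z : P z -> st z = z.
Proof.
move=> [s ->]; rewrite (big_morph st stD st0); apply: eq_bigr => y _.
by rewrite stM (star_invol hst).
Qed.

Section Poly.
Variable x : A.
Hypothesis hx : st x = x.

Local Notation E := (horner_alg x).
Definition PE (p : {poly rat}) := P (E p).

Lemma EX : E 'X = x. Proof. exact: horner_algX. Qed.
Lemma EC c : E c%:P = c%:A. Proof. exact: horner_algC. Qed.

Lemma EM p q : E (p * q) = E p * E q. Proof. exact: rmorphM. Qed.
Lemma ED p q : E (p + q) = E p + E q. Proof. exact: rmorphD. Qed.
Lemma EB p q : E (p - q) = E p - E q. Proof. exact: rmorphB. Qed.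
Lemma EN p : E (- p) = - E p. Proof. exact: rmorphN. Qed.
Lemma E0 : E 0 = 0. Proof. exact: rmorph0. Qed.
Lemma E1 : E 1 = 1. Proof. exact: rmorph1. Qed.
Lemma EXn p n : E (p ^+ n) = E p ^+ n. Proof. exact: rmorphXn. Qed.
Lemma Esum I (r : seq I) (F : I -> {poly rat}) : E (\sum_(i <- r) F i) = \sum_(i <- r) E (F i).
Proof. exact: rmorph_sum. Qed.

Lemma E_herm p : st (E p) = E p.
Proof.
elim/poly_ind: p => [|p c IH]; first by rewrite E0 st0.
by rewrite ED EM stD stM EX EC stC hx IH -{1}EX -EM mulrC EM EX.
Qed.

Lemma PE_add p q : PE p -> PE q -> PE (p + q).
Proof. by rewrite /PE rmorphD; apply: PD. Qed.

Lemma PE_mulC c p : 0 <= c -> PE p -> PE (c%:P * p).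
Proof. by rewrite /PE EM EC mulr_algl; apply: PZ. Qed.

Lemma PE_conj q p : PE p -> PE (q * p * q).
Proof. by rewrite /PE !EM -{1}(E_herm q); apply: Pconj. Qed.

Lemma PE_sq q : PE (q * q).
Proof. by rewrite /PE EM -{1}(E_herm q); apply: Psq. Qed.

Lemma PE_C c : 0 <= c -> PE c%:P.
Proof. by rewrite /PE EC; apply: PC. Qed.

Lemma PE_eq p q : p = q -> PE p -> PE q.
Proof. by move=> ->. Qed.

Lemma PE_divC c p : 0 < c -> PE (c%:P * p) -> PE p.
Proof.
move=> c0 h; apply: (@PE_eq (c^-1%:P * (c%:P * p))).
  by rewrite mulrA -polyCM mulVf ?gt_eqF // mul1r.
by apply: PE_mulC => //; rewrite invr_ge0 ltW.
Qed.

Lemma PE_prod c h : 0 < c -> PE h -> PE (c%:P - h) -> PE (c%:P * h - h * h).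
Proof.
move=> c0 h1 h2; apply: (@PE_divC c _ c0).
apply: (@PE_eq (h * (c%:P - h) * h + (c%:P - h) * h * (c%:P - h))); first by ring.
by apply: PE_add; apply: PE_conj.
Qed.

Lemma PE_sqle c h : 0 < c -> PE h -> PE (c%:P - h) -> PE ((c * c)%:P - h * h).
Proof.
move=> c0 h1 h2.
apply: (@PE_eq (c%:P * (c%:P - h) + (c%:P * h - h * h))); first by rewrite polyCM; ring.
by apply: PE_add; [apply: PE_mulC => //; apply: ltW | apply: PE_prod].
Qed.

Lemma PE_step r y k : 0 < r -> PE y -> PE (r%:P - y) ->
  PE (r%:P * y ^+ k - y ^+ k.+1).
Proof.
move=> r0 h1 h2; rewrite -(odd_double_half k); set j := k./2.
have e2 : y ^+ j.*2 = y ^+ j * y ^+ j by rewrite -addnn exprD.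
case: (odd k) => /=.
  rewrite add1n !exprS e2.
  apply: (@PE_eq (y ^+ j * (r%:P * y - y * y) * y ^+ j)); first by ring.
  by apply: PE_conj; apply: PE_prod.
rewrite add0n exprS e2.
apply: (@PE_eq (y ^+ j * (r%:P - y) * y ^+ j)); first by ring.
exact: PE_conj.
Qed.

Lemma PE_pow r y k : 0 < r -> PE y -> PE (r%:P - y) ->
  PE (y ^+ k) /\ PE ((r ^+ k)%:P - y ^+ k).
Proof.
move=> r0 h1 h2; split.
  rewrite -(odd_double_half k); set j := k./2.
  have e2 : y ^+ j.*2 = y ^+ j * y ^+ j by rewrite -addnn exprD.
  case: (odd k) => /=.
    rewrite add1n exprS e2.
    apply: (@PE_eq (y ^+ j * y * y ^+ j)); first by ring.
    exact: PE_conj.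
  by rewrite add0n e2; apply: PE_sq.
elim: k => [|k IH]; first by rewrite !expr0 subrr; apply: PE_C.
apply: (@PE_eq (r%:P * ((r ^+ k)%:P - y ^+ k) + (r%:P * y ^+ k - y ^+ k.+1))).
  by rewrite (exprS r) polyCM; ring.
apply: PE_add; last exact: PE_step.
by apply: PE_mulC => //; apply: ltW.
Qed.

Lemma normE h al : 0 < al -> PE (al%:P - h * h) -> norm_bound st (horner_alg x h) al.
Proof. by move=> a0 hP; split=> //; rewrite /sle E_herm -EM -EC -EB. Qed.

Lemma normEN h al : 0 < al -> PE (al%:P - h * h) -> norm_bound st (- horner_alg x h) al.
Proof. by move=> a0 hP; split=> //; rewrite /sle stN mulrNN E_herm -EM -EC -EB. Qed.

End Poly.

Lemma polyC_sum (r : seq nat) (F : nat -> rat) :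
  (\sum_(i <- r) F i)%:P = \sum_(i <- r) (F i)%:P.
Proof. exact: (big_morph (fun c : rat => c%:P) (@polyCD _) (@polyC0 _)). Qed.

Lemma null0 : null_seq st (fun _ => 0).
Proof.
move=> e e0; exists 0%N => n _; exists (e ^+ 2 / 2); split; last first.
  have : 0 < e ^+ 2 by apply: exprn_gt0.
  lra.
split; first by apply: divr_gt0 => //; apply: exprn_gt0.
rewrite /sle st0 mul0r subr0; apply: PC.
by apply: divr_ge0 => //; apply: exprn_ge0; apply: ltW.
Qed.

Lemma xbound x : st x = x -> (exists b0, norm_bound st x b0) ->
  exists be, 0 < be /\ PE x (be%:P - 'X).
Proof.
move=> hx [b0 [b00 hb0]].
rewrite /sle hx in hb0.
pose be := (1 + b0) / 2.
have be0 : 0 < be by rewrite /be; lra.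
have hbx : PE x (be%:P - 'X).
  apply: (@PE_divC x 2); first by [].
  apply: (@PE_eq x ((b0%:P - 'X * 'X) + (1 - 'X) * (1 - 'X))).
    have e : 2 * be = 1 + b0 by rewrite /be; field.
    rewrite [RHS]mulrBr -polyCM e polyCD polyC1; ring.
  apply: PE_add; last exact: (PE_sq x hx).
  by rewrite /PE EB EM EX EC.
exists be; split => //.
Qed.

Lemma back x : P x -> (forall z, exists al, norm_bound st z al) ->
  (exists al : rat, 0 < al /\ P (x - al%:A)) -> Cstar_invertible st (Cstar_img x).
Proof.
move=> hxP harch [al [al0 hal]].
have hx : st x = x := Pherm x hxP.
have [be [be0 hbx]] := xbound x hx (harch x).
pose al' := al * be / (al + be).
pose r := be / (al + be).
have r0 : 0 < r by rewrite /r; apply: divr_gt0 => //; lra.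
have r1 : r < 1.
  by rewrite /r ltr_pdivrMr; lra.
pose bi := be^-1.
have bi0 : 0 < bi by rewrite /bi invr_gt0.
pose y : {poly rat} := 1 - bi%:P * 'X.
have hy : PE x y.
  apply: (@PE_eq x (bi%:P * (be%:P - 'X))).
    by rewrite /y mulrBr -polyCM /bi mulVf ?gt_eqF // polyC1.
  by apply: PE_mulC => //; apply: ltW.
have hry : PE x (r%:P - y).
  apply: (@PE_eq x (bi%:P * (('X - al%:P) + (al - al')%:P))).
    have e : r = 1 + bi * ((al - al') - al).
      by rewrite /r /bi /al'; field; apply/andP; split; rewrite gt_eqF //; lra.
    rewrite /y e !(polyCD, polyCN, polyCM, polyC1); ring.
  apply: PE_mulC; first exact: ltW.
  apply: PE_add; first by rewrite /PE EB EX EC.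
  apply: PE_C; rewrite /al' subr_ge0 ler_pdivrMr; last lra.
  nra.
have hpow k := PE_pow x hx r y k r0 hy hry.
pose u (n : nat) := horner_alg x (bi%:P * \sum_(k < n) y ^+ k).
have hxu n : x * u n = 1 - horner_alg x (y ^+ n).
  rewrite /u -{1}(EX x) -EM -(E1 x) -EB; congr (horner_alg x _).
  have -> : 'X * (bi%:P * \sum_(k < n) y ^+ k) = (1 - y) * \sum_(k < n) y ^+ k.
    by rewrite /y; ring.
  have h := subrX1 y n.
  apply: oppr_inj; rewrite [RHS]opprB h -mulNr opprB //.
have hux n : u n * x = x * u n.
  have h1 := EM x (bi%:P * \sum_(k < n) y ^+ k) 'X.
  have h2 := EM x 'X (bi%:P * \sum_(k < n) y ^+ k).
  by rewrite EX in h1 h2; rewrite /u -h1 -h2 mulrC.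
have hnull : null_seq st (fun n => x * u n - 0 * 0 - 1).
  move=> e e0; have [N hN] := small r e (ltW r0) r1 e0.
  exists N => n hn; exists (r ^+ n * r ^+ n); split.
    have -> : x * u n - 0 * 0 - 1 = - horner_alg x (y ^+ n).
      by rewrite hxu mulr0 subr0 addrAC subrr add0r.
    apply: (normEN x hx); first by apply: mulr_gt0; apply: exprn_gt0.
    by apply: (PE_sqle x hx); [apply: exprn_gt0 | case: (hpow n) | case: (hpow n)].
  have h1 : r ^+ n <= r ^+ N by apply: ler_wiXn2l => //; apply: ltW.
  have h2 : 0 <= r ^+ n by apply: exprn_ge0; apply: ltW.
  rewrite expr2; nra.
have PE0 : PE x 0 by rewrite /PE E0; exact: P0.
pose t := 1 - r.
have t0 : 0 < t by rewrite /t; lra.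
pose k0 := bi / t.
have k00 : 0 < k0 by rewrite /k0; apply: divr_gt0.
have hbound n m : (n <= m)%N -> norm_bound st (u m - u n) (k0 * r ^+ n * (k0 * r ^+ n)).
  move=> hnm.
  pose S := \sum_(n <= k < m) y ^+ k.
  have -> : u m - u n = horner_alg x (bi%:P * S).
    rewrite /u -EB -mulrBr; congr (horner_alg x (_ * _)).
    rewrite -!(big_mkord xpredT (fun k => y ^+ k)) (big_cat_nat (leq0n n) hnm) /=.
    by rewrite [X in X - _]addrC addrK.
  have c0 : 0 < k0 * r ^+ n by apply: mulr_gt0 => //; apply: exprn_gt0.
  apply: (normE x hx); first exact: mulr_gt0.
  apply: (PE_sqle x hx) => //.
    apply: PE_mulC; first exact: ltW.
    apply: (big_ind (PE x)) => //; first exact: PE_add.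
    by move=> k _; case: (hpow k).
  have g := @geo r n m hnm.
  have tn0 : t != 0 by rewrite gt_eqF.
  have hS : \sum_(n <= k < m) r ^+ k = t^-1 * (r ^+ n - r ^+ m).
    by rewrite -g /t mulKf.
  have ec : k0 * r ^+ n = bi * (r ^+ m / t + \sum_(n <= k < m) r ^+ k).
    by rewrite hS /k0; field.
  apply: (@PE_eq x (bi%:P * ((r ^+ m / t)%:P + \sum_(n <= k < m) ((r ^+ k)%:P - y ^+ k)))).
    rewrite ec (polyCM bi) (polyCD (r ^+ m / t)) polyC_sum sumrB /S.
    set P1 := (r ^+ m / t)%:P; set Q := \sum_(n <= k < m) (r ^+ k)%:P.
    set Y := \sum_(n <= k < m) y ^+ k; set B := bi%:P; ring.
  apply: PE_mulC; first exact: ltW.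
  apply: PE_add.
    apply: PE_C; apply: divr_ge0; [apply: exprn_ge0; exact: ltW | exact: ltW].
  apply: (big_ind (PE x)) => //; first exact: PE_add.
  by move=> k _; case: (hpow k).
have hcau : cauchy st u.
  move=> e e0.
  have [N hN] := small r (e / k0) (ltW r0) r1 (divr_gt0 e0 k00).
  have hc : forall n, (N <= n)%N -> k0 * r ^+ n * (k0 * r ^+ n) < e ^+ 2.
    move=> n hn.
    have h1 : r ^+ n <= r ^+ N by apply: ler_wiXn2l => //; apply: ltW.
    have h2 : 0 <= r ^+ n by apply: exprn_ge0; apply: ltW.
    have h3 : k0 * r ^+ N < e by rewrite mulrC -ltr_pdivlMr.
    have h4 : k0 * r ^+ n <= k0 * r ^+ N by apply: ler_wpM2l => //; exact: ltW.
    have h5 : 0 <= k0 * r ^+ n by apply: mulr_ge0 => //; exact: ltW.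
    rewrite expr2; nra.
  exists N => m n hm hn.
  case: (leqP n m) => hnm.
    by exists (k0 * r ^+ n * (k0 * r ^+ n)); split; [apply: hbound | apply: hc].
  exists (k0 * r ^+ m * (k0 * r ^+ m)); split; last by apply: hc.
  have [b1 b2] := hbound m n (ltnW hnm).
  split => //; have e' : u n - u m = - (u m - u n) by rewrite opprB.
  by rewrite e' stN mulrNN in b2.
exists (u, fun _ => 0); split; first by split => //= e e0; have [N hN] := null0 e e0; exists N => m n hm _;
  rewrite subr0; apply: hN.
split; split => /=.
- exact: hnull.
- move=> e e0; have [N hN] := null0 e e0; exists N => n hn; rewrite mul0r mulr0 addr0 subr0; exact: hN.
- move=> e e0; have [N hN] := hnull e e0; exists N => n hn; rewrite hux; exact: hN.
- move=> e e0; have [N hN] := null0 e e0; exists N => n hn; rewrite mul0r mulr0 addr0 subr0; exact: hN.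
Qed.

Lemma forw x : P x -> (forall z, exists al, norm_bound st z al) ->
  Cstar_invertible st (Cstar_img x) -> exists al : rat, 0 < al /\ P (x - al%:A).
Proof.
move=> hxP harch [q [_ [_ [h1 _]]]].
have hx : st x = x := Pherm x hxP.
have h12 : (0 : rat) < 1 / 2 by [].
have [N hN] := h1 (1 / 2) h12.
have [aw [[aw0 haw] awlt]] := hN N (leqnn N).
move: haw; rewrite /sle /= mulr0 subr0 => haw.
set u := q.1 N in haw.
set w := u * x - 1 in haw.
have ux : u * x = 1 + w by rewrite /w addrC subrK.
clearbody w.
have [M [M0 hM]] := harch u.
rewrite /sle in hM.
have [be [be0 hbx]] := xbound x hx (harch x).
pose T := 2 *: (st x * (M%:A - st u * u) * x) + st (1 + 2 *: w) * (1 + 2 *: w)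
   + 2 *: (aw%:A - st w * w).
have hT : P T.
  apply: PD; first apply: PD.
  - by apply: PZ => //; apply: Pconj.
  - exact: Psq.
  - by apply: PZ.
have ea : x * (st u * u) * x = 1 + w + st w + st w * w.
  have e1 : st (u * x) * (u * x) = x * (st u * u) * x by rewrite stM hx !mulrA.
  by rewrite -e1 ux stD st1 mulrDl !mulrDr !mul1r mulr1 !addrA.
have eT : T = (2 * M) *: (x * x) - (1 - 2 * aw) *: 1.
  rewrite /T hx mulrBr mulrBl mulr_algr -scalerAl ea stD st1 stZ.
  rewrite mulrDl !mulrDr !mul1r !mulr1 -!scalerAl -!scalerAr scalerA.
  pose z (i : nat) := match i with 0 => x * x | 1 => w | 2 => st w | 3 => st w * w | _ => 1 end.
  have e0 : x * x = fl z ('X^(@Ordinal 6 0 isT)) by rewrite flX.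
  have e3 : st w * w = fl z ('X^(@Ordinal 6 3 isT)) by rewrite flX.
  have e2 : st w = fl z ('X^(@Ordinal 6 2 isT)) by rewrite flX.
  have e1 : w = fl z ('X^(@Ordinal 6 1 isT)) by rewrite flX.
  have e4 : 1 = fl z ('X^(@Ordinal 6 4 isT)) by rewrite flX.
  rewrite e0 e3 e2 e1 e4 /=.
  rewrite -!(flZ, flD, flB, flN).
  congr (fl z _).
  ring.
have hK : PE x ((2 * M)%:P * ('X * 'X) - (1 - 2 * aw)%:P).
  by rewrite /PE EB EM !EC EM EX mulr_algl; move: hT; rewrite eT.
have hX : PE x 'X by rewrite /PE EX.
have hp := PE_prod x hx be (polyX rat) be0 hX hbx.
pose K := 2 * M.
pose de := 1 - 2 * aw.
have K0 : 0 < K by rewrite /K; lra.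
have de0 : 0 < de by rewrite /de; rewrite expr2 in awlt; lra.
have Kb0 : 0 < K * be by apply: mulr_gt0.
exists (de / (K * be)); split; first by apply: divr_gt0.
have -> : x - (de / (K * be))%:A = horner_alg x ('X - (de / (K * be))%:P) by rewrite EB EX EC.
apply: (@PE_divC x (K * be)) => //.
apply: (@PE_eq x (K%:P * (be%:P * 'X - 'X * 'X) + (K%:P * ('X * 'X) - de%:P))).
  have ed : K * be * (de / (K * be)) = de by rewrite mulrC divfK // lt0r_neq0.
  rewrite [RHS]mulrBr -polyCM ed (polyCM K be); ring.
apply: PE_add; last exact: hK.
by apply: PE_mulC => //; apply: ltW.
Qed.


End Basic.

Theorem proposition2p9 (A : algType rat) (st : A -> A)
  (hst : star_alg st) (harch : archimedean st) (x : A) (hx : pos_cone st x) :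
  Cstar_invertible st (Cstar_img x) <->
  exists alpha : rat, 0 < alpha /\ pos_cone st (x - alpha%:A).
Proof.
split => h.
- exact: (@forw A st hst x hx harch.2 h).
- exact: (@back A st hst x hx harch.2 h).
Qed.
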